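(* Let $\alpha\in\mathbb{R}$ and let $m\ge 0$ be an even integer. Let $b_0,\dots,b_m$ be the unique solution of $$\sum_{k=0}^{i}\frac{(-1)^{i-k}}{i-k+1}\,b_k=\frac{(-1)^{i+1}}{i+2}-\binom{-\alpha}{i+1},\qquad i=0,1,\dots,m,$$ and set $c_i=\sum_{k=i}^{m}\binom{k}{i}(-1)^{k-i}b_k$ for $i=0,\dots,m$. Then for every integer $n\ge 0$, every $h>0$, and every real polynomial $f$ of degree at most $m+1$, $$\int_{-\alpha h}^{(n+\alpha)h} f(t)\,dt \;=\; h\sum_{i=0}^{n} f(ih)\;+\;h\sum_{i=0}^{m} c_i\Big[f(ih)+f\big((n-i)h\big)\Big].$$
   Context: For real $x$ and integer $j\ge 0$, $\binom{x}{j}$ denotes the generalized binomial coefficient $x(x-1)\cdots(x-j+1)/j!$ (with $\binom{x}{0}=1$). The integral limits are oriented, and nodes outside $[0,nh]$ (when $\alpha<0$ or $m>n$) are used literally. *)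

(* Defs.v *)
From Stdlib Require Import Reals Lra.
From Coquelicot Require Import Coquelicot.
Open Scope R_scope.

Fixpoint fall (x : R) (j : nat) : R :=
  match j with
  | O => 1
  | S j' => fall x j' * (x - INR j')
  end.

Definition gbinom (x : R) (j : nat) : R := fall x j / INR (Factorial.fact j).

Definition polyR (a : nat -> R) (d : nat) (t : R) : R :=
  sum_f_R0 (fun j => a j * t ^ j) d.

Definition b_system (alpha : R) (m : nat) (b : nat -> R) : Prop :=
  forall i : nat, (i <= m)%nat ->
    sum_f_R0 (fun k => (-1) ^ (i - k) / INR (i - k + 1) * b k) i
    = (-1) ^ (i + 1) / INR (i + 2) - gbinom (- alpha) (i + 1).

(* c_i = sum_{k=i}^{m} binom(k,i) (-1)^(k-i) b_k, reindexed with k = i + j. *)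
Definition c_coef (m : nat) (b : nat -> R) (i : nat) : R :=
  sum_f_R0 (fun j => gbinom (INR (i + j)) i * (-1) ^ j * b (i + j)%nat) (m - i).

(* Main.v *)
Require Import Defs.
From Stdlib Require Import Reals Lra Lia.
From Coquelicot Require Import Coquelicot.
Open Scope R_scope.

Fixpoint Poly (d : nat) (F : R -> R) : Prop :=
  match d with
  | O => exists c, forall s, F s = c
  | S d' => exists c G, Poly d' G /\ forall s, F s = c + s * G s
  end.

Lemma Poly_ext d F G : (forall s, F s = G s) -> Poly d F -> Poly d G.
Proof.
  destruct d as [|d]; simpl.
  - intros H [c Hc]. exists c. intros s. rewrite <- H. auto.
  - intros H [c [G1 [HP Hc]]]. exists c, G1. split; auto. intros s. rewrite <- H. auto.
Qed.

Lemma Poly_const d c : Poly d (fun _ => c).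
Proof.
  induction d as [|d IH]; simpl.
  - exists c. auto.
  - exists c, (fun _ => 0). split.
    + clear IH. induction d; simpl. exists 0; auto. exists 0, (fun _ => 0). split; auto. intros; ring.
    + intros; ring.
Qed.

Lemma Poly_plus d F G : Poly d F -> Poly d G -> Poly d (fun s => F s + G s).
Proof.
  revert F G; induction d as [|d IH]; simpl.
  - intros F G [c1 H1] [c2 H2]. exists (c1+c2). intros; rewrite H1, H2; auto.
  - intros F G [c1 [F1 [P1 H1]]] [c2 [G1 [P2 H2]]].
    exists (c1+c2), (fun s => F1 s + G1 s). split. apply IH; auto.
    intros; rewrite H1, H2; ring.
Qed.

Lemma Poly_scal d c F : Poly d F -> Poly d (fun s => c * F s).
Proof.
  revert F; induction d as [|d IH]; simpl.
  - intros F [c1 H1]. exists (c*c1). intros; rewrite H1; auto.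
  - intros F [c1 [F1 [P1 H1]]].
    exists (c*c1), (fun s => c * F1 s). split. apply IH; auto.
    intros; rewrite H1; ring.
Qed.

Lemma Poly_S d F : Poly d F -> Poly (S d) F.
Proof.
  revert F; induction d as [|d IH].
  - intros F [c H]. exists c, (fun _ => 0). split. exists 0; auto. intros; rewrite H; ring.
  - intros F [c1 [F1 [P1 H1]]]. exists c1, F1. split; auto.
Qed.

Lemma Poly_le d d' F : (d <= d')%nat -> Poly d F -> Poly d' F.
Proof. induction 1; auto. intros; apply Poly_S; auto. Qed.

Lemma Poly_mulx d F : Poly d F -> Poly (S d) (fun s => s * F s).
Proof. intros H. exists 0, F. split; auto. intros; ring. Qed.

Lemma Poly_pow d : Poly d (fun s => s ^ d).
Proof.
  induction d as [|d IH]. exists 1; auto.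
  exists 0, (fun s => s ^ d). split; auto. intros; simpl; ring.
Qed.

Lemma Poly_affine d A u v F : Poly d F -> Poly d (fun s => A * F (u * s + v)).
Proof.
  revert A F; induction d as [|d IH]; intros A F.
  - intros [c H]. exists (A*c). intros; rewrite H; auto.
  - intros [c [F1 [P1 H1]]].
    assert (HP : Poly (S d) (fun s => (A * c + A * v * F1 (u*s+v)) + s * (A * u * F1 (u*s+v)))).
    { apply Poly_plus. apply Poly_plus. apply Poly_const. apply Poly_S. apply IH; auto.
      apply Poly_mulx. apply IH; auto. }
    eapply Poly_ext; [|exact HP]. intros s; simpl. rewrite H1. ring.
Qed.

Lemma Poly_top d G : Poly (S d) G -> exists l r, Poly d r /\ forall s, G s = l * s ^ (S d) + r s.
Proof.
  revert G; induction d as [|d IH]; intros G [c [G1 [P1 H1]]].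
  - destruct P1 as [l Hl]. exists l, (fun _ => c). split. exists c; auto.
    intros; rewrite H1, Hl; simpl; ring.
  - destruct (IH G1 P1) as [l [r [Pr Hr]]]. exists l, (fun s => c + s * r s). split.
    exists c, r; auto. intros; rewrite H1, Hr; simpl; ring.
Qed.

Lemma Poly_polyR a d : Poly d (polyR a d).
Proof.
  induction d as [|d IH].
  - exists (a 0%nat). intros; unfold polyR; simpl; ring.
  - assert (HP : Poly (S d) (fun s => polyR a d s + a (S d) * s ^ (S d))).
    { apply Poly_plus. apply Poly_S; auto. apply Poly_scal, Poly_pow. }
    eapply Poly_ext; [|exact HP]. intros; unfold polyR; simpl. auto.
Qed.

Lemma Poly_derive d F : Poly d F -> forall s, ex_derive F s.
Proof.
  revert F; induction d as [|d IH]; intros F.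
  - intros [c H] s. apply ex_derive_ext with (fun _ => c). intros; auto. auto_derive; auto.
  - intros [c [F1 [P1 H1]]] s. apply ex_derive_ext with (fun s => c + s * F1 s). intros; auto.
    auto_derive. apply IH; auto.
Qed.

Lemma fall_shift x j : fall (x+1) (S j) = (x+1) * fall x j.
Proof.
  induction j as [|j IH]. cbn [fall]. simpl INR. ring.
  change (fall (x+1) (S (S j))) with (fall (x+1) (S j) * (x+1 - INR (S j))).
  rewrite IH, S_INR. cbn [fall]. ring.
Qed.

Lemma fall_pascal x j : fall (x+1) (S j) - fall x (S j) = INR (S j) * fall x j.
Proof. rewrite fall_shift. cbn [fall]. rewrite S_INR. ring. Qed.

Lemma gbinom_pascal x j : gbinom (x+1) (S j) - gbinom x (S j) = gbinom x j.
Proof.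
  unfold gbinom. assert (H := fall_pascal x j).
  assert (HF : INR (Factorial.fact (S j)) = INR (S j) * INR (Factorial.fact j)).
  { simpl Factorial.fact. rewrite <- mult_INR. auto. }
  rewrite HF. assert (H1 := INR_fact_neq_0 j). assert (H2 : INR (S j) <> 0) by (apply not_0_INR; lia).
  replace (fall x j) with ((fall (x+1) (S j) - fall x (S j)) / INR (S j)) by (rewrite H; field; auto).
  field. auto.
Qed.

Lemma gbinom0 x : gbinom x 0 = 1.
Proof. unfold gbinom; simpl; field. Qed.

Lemma fall_struct j : exists e, Poly j e /\ forall s, fall s (S j) = s ^ (S j) + e s.
Proof.
  induction j as [|j [e [Pe He]]].
  - exists (fun _ => 0). split. exists 0; auto. intros; cbn [fall]; simpl INR; simpl pow; ring.
  - set (c := INR (S j)).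
    exists (fun s => (-c) * s ^ (S j) + (s * e s + (-c) * e s)). split.
    + apply Poly_plus. apply Poly_scal, Poly_pow. apply Poly_plus. apply Poly_mulx; auto.
      apply Poly_S, Poly_scal; auto.
    + intros s. change (fall s (S (S j))) with (fall s (S j) * (s - INR (S j))).
      rewrite He. fold c. simpl. ring.
Qed.

Lemma gbinom_struct j : exists e, Poly j e /\ forall s, gbinom s (S j) = s ^ (S j) / INR (Factorial.fact (S j)) + e s.
Proof.
  destruct (fall_struct j) as [e [Pe He]].
  exists (fun s => / INR (Factorial.fact (S j)) * e s). split. apply Poly_scal; auto.
  intros s. unfold gbinom. rewrite He. field. apply INR_fact_neq_0.
Qed.

Lemma Poly_gbinom j : Poly j (fun s => gbinom s j).
Proof.
  destruct j as [|j]. exists 1. intros; apply gbinom0.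
  destruct (gbinom_struct j) as [e [Pe He]].
  eapply Poly_ext. intros s; symmetry; apply He.
  apply Poly_plus. eapply Poly_ext. intros s. instantiate (1 := fun s => / INR (Factorial.fact (S j)) * s ^ S j).
  simpl. unfold Rdiv. ring. apply Poly_scal, Poly_pow. apply Poly_S; auto.
Qed.

Lemma span (P : (R -> R) -> Prop) d :
  (forall F1 F2, P F1 -> P F2 -> P (fun s => F1 s + F2 s)) ->
  (forall c F, P F -> P (fun s => c * F s)) ->
  (forall F1 F2, (forall s, F1 s = F2 s) -> P F1 -> P F2) ->
  (forall j, (j <= d)%nat -> P (fun s => gbinom s j)) ->
  forall G, Poly d G -> P G.
Proof.
  intros Hp Hs He. induction d as [|d IH]; intros Hb G HG.
  - destruct HG as [c Hc]. apply He with (fun s => c * gbinom s 0).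
    intros; rewrite gbinom0, Hc; ring. apply Hs, Hb; auto.
  - destruct (Poly_top d G HG) as [l [r [Pr Hr]]].
    destruct (gbinom_struct d) as [e [Pe He']].
    set (k := INR (Factorial.fact (S d))).
    assert (Hk : k <> 0) by apply INR_fact_neq_0.
    apply He with (fun s => (l * k) * gbinom s (S d) + (r s + (- (l*k)) * e s)).
    { intros s. rewrite Hr, He'. fold k. field. auto. }
    apply Hp. apply Hs, Hb; auto.
    apply IH. intros; apply Hb; lia.
    apply Poly_plus; auto. apply Poly_scal; auto.
Qed.

Fixpoint dfall (x : R) (j : nat) : R :=
  match j with
  | O => 0
  | S j' => dfall x j' * (x - INR j') + fall x j'
  end.

Lemma is_derive_eq (f : R -> R) x l l' : is_derive f x l -> l = l' -> is_derive f x l'.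
Proof. intros H <-; auto. Qed.

Lemma fall_derive j x : is_derive (fun t => fall t j) x (dfall x j).
Proof.
  revert x; induction j as [|j IH]; intros x.
  - cbn [fall dfall]. auto_derive; auto.
  - assert (H2 : is_derive (fun t => t - INR j) x 1) by (auto_derive; auto; ring).
    generalize (is_derive_mult _ _ x _ _ (IH x) H2 Rmult_comm). intros H.
    cbn [fall dfall]. eapply is_derive_eq. exact H.
    unfold plus, mult; simpl. ring.
Qed.

Definition Hf (j : nat) (x : R) : R := dfall x (S j) / INR (Factorial.fact (S j)).

Lemma gbinom_derive j x : is_derive (fun t => gbinom t (S j)) x (Hf j x).
Proof.
  unfold gbinom, Hf.
  apply is_derive_ext with (fun t => / INR (Factorial.fact (S j)) * fall t (S j)).
  intros t; unfold Rdiv; apply Rmult_comm.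
  eapply is_derive_eq. apply is_derive_scal, fall_derive. unfold Rdiv; apply Rmult_comm.
Qed.

Lemma is_derive_shift1 (f : R -> R) x l : is_derive f (x+1) l -> is_derive (fun t => f (t+1)) x l.
Proof.
  intros H. generalize (is_derive_comp f (fun t => t + 1) x l 1 H). intros H1.
  eapply is_derive_eq. apply H1. auto_derive; auto. unfold scal; simpl. unfold mult; simpl. ring.
Qed.

Lemma is_derive_Rminus (f g : R -> R) x a b : is_derive f x a -> is_derive g x b -> is_derive (fun t => f t - g t) x (a - b).
Proof. intros. apply (is_derive_minus f g x a b); auto. Qed.

Lemma is_derive_Rplus (f g : R -> R) x a b : is_derive f x a -> is_derive g x b -> is_derive (fun t => f t + g t) x (a + b).
Proof. intros. apply (is_derive_plus f g x a b); auto. Qed.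

Lemma Hf_diff j x : Hf (S j) (x+1) - Hf (S j) x = Hf j x.
Proof.
  assert (H1 : is_derive (fun t => gbinom (t+1) (S (S j)) - gbinom t (S (S j))) x (Hf (S j) (x+1) - Hf (S j) x)).
  { apply (is_derive_Rminus (fun t => gbinom (t+1) (S (S j))) (fun t => gbinom t (S (S j)))).
    apply (is_derive_shift1 (fun t => gbinom t (S (S j)))). apply (gbinom_derive (S j)). apply (gbinom_derive (S j)). }
  apply is_derive_ext with (g := fun t => gbinom t (S j)) in H1.
  2: intros; apply gbinom_pascal.
  apply is_derive_unique in H1. rewrite <- H1. apply (is_derive_unique (fun t => gbinom t (S j))), gbinom_derive.
Qed.

Lemma Hf0 x : Hf 0 x = 1.
Proof. unfold Hf. cbn [dfall fall]. simpl. field. Qed.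

Lemma fall0 j : fall 0 (S j) = 0.
Proof. induction j as [|j IH]. cbn [fall]. simpl. ring. change (fall 0 (S (S j))) with (fall 0 (S j) * (0 - INR (S j))). rewrite IH; ring. Qed.

Lemma dfall0 j : dfall 0 (S j) = (-1) ^ j * INR (Factorial.fact j).
Proof.
  induction j as [|j IH]. cbn [dfall fall]. simpl. ring.
  change (dfall 0 (S (S j))) with (dfall 0 (S j) * (0 - INR (S j)) + fall 0 (S j)).
  rewrite IH, fall0. change (Factorial.fact (S j)) with (S j * Factorial.fact j)%nat.
  rewrite mult_INR. simpl pow. ring.
Qed.

Lemma Hf_at0 j : Hf j 0 = (-1) ^ j / INR (j + 1).
Proof.
  unfold Hf. rewrite dfall0. change (Factorial.fact (S j)) with (S j * Factorial.fact j)%nat.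
  rewrite mult_INR. replace (j+1)%nat with (S j) by (rewrite Nat.add_comm; reflexivity).
  field. split. apply not_0_INR. discriminate. apply INR_fact_neq_0.
Qed.

Fixpoint dif (k : nat) (F : R -> R) : R -> R :=
  match k with
  | O => F
  | S k' => dif k' (fun t => F (t+1) - F t)
  end.

Lemma dif_ext k : forall F G, (forall t, F t = G t) -> forall s, dif k F s = dif k G s.
Proof.
  induction k as [|k IH]; intros F G H s; simpl; auto.
  apply IH. intros; rewrite !H; auto.
Qed.

Lemma dif_zero k : forall F, (forall t, F t = 0) -> forall s, dif k F s = 0.
Proof.
  induction k as [|k IH]; intros F H s; simpl; auto.
  apply IH. intros; rewrite !H; ring.
Qed.

Lemma dif_Hf k : forall i, (k <= i)%nat -> forall s, dif k (Hf i) s = Hf (i - k) s.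
Proof.
  induction k as [|k IH]; intros i Hi s.
  - simpl. rewrite Nat.sub_0_r. auto.
  - destruct i as [|i]. lia. simpl.
    rewrite (dif_ext k _ (Hf i)). apply IH. lia. intros; apply Hf_diff.
Qed.

Lemma dif_Hf_high i : forall k, (i < k)%nat -> forall s, dif k (Hf i) s = 0.
Proof.
  induction i as [|i IH]; intros k Hk s.
  - destruct k as [|k]. lia. simpl. apply dif_zero. intros; rewrite !Hf0; ring.
  - destruct k as [|k]. lia. simpl. rewrite (dif_ext k _ (Hf i)). apply IH. lia. intros; apply Hf_diff.
Qed.

Lemma gbinom_nat_high k : gbinom (INR k) (S k) = 0.
Proof. unfold gbinom. change (fall (INR k) (S k)) with (fall (INR k) k * (INR k - INR k)). 
  replace (INR k - INR k) with 0 by ring. unfold Rdiv. ring. Qed.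

Lemma gbinom_nat_pascal k i : gbinom (INR (S k)) (S i) = gbinom (INR k) (S i) + gbinom (INR k) i.
Proof. rewrite S_INR. rewrite <- (gbinom_pascal (INR k) i). ring. Qed.

Lemma sum_shift (g : nat -> R) k : sum_f_R0 (fun i => g (S i)) k = sum_f_R0 g (S k) - g O.
Proof. rewrite (decomp_sum g (S k)). simpl pred. ring. lia. Qed.

Definition acoef (k i : nat) : R := gbinom (INR k) i * (-1) ^ (k - i).

Lemma acoef_S0 k : acoef (S k) 0 = - acoef k 0.
Proof. unfold acoef. rewrite !gbinom0. rewrite !Nat.sub_0_r. simpl. ring. Qed.

Lemma acoef_SS k i : (i <= k)%nat -> acoef (S k) (S i) = acoef k i - acoef k (S i).
Proof.
  intros H. unfold acoef. rewrite gbinom_nat_pascal. simpl (S k - S i)%nat.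
  destruct (Nat.eq_dec i k) as [->|Hne].
  - rewrite gbinom_nat_high. ring.
  - replace (k - i)%nat with (S (k - S i)) by lia. simpl. ring.
Qed.

Lemma dif_formula k : forall F s, dif k F s = sum_f_R0 (fun i => acoef k i * F (s + INR i)) k.
Proof.
  induction k as [|k IH]; intros F s.
  - simpl. unfold acoef. rewrite gbinom0. simpl. rewrite Rplus_0_r. ring.
  - simpl dif. rewrite IH.
    rewrite (decomp_sum _ (S k)) by lia. simpl pred.
    rewrite acoef_S0.
    rewrite (sum_eq (fun i => acoef (S k) (S i) * F (s + INR (S i)))
                    (fun i => acoef k i * F (s + INR i + 1) - acoef k (S i) * F (s + INR (S i)))).
    2: { intros i Hi. rewrite acoef_SS by auto. rewrite S_INR. replace (s + (INR i + 1)) with (s + INR i + 1) by ring. ring. }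
    rewrite minus_sum.
    rewrite (sum_shift (fun i => acoef k i * F (s + INR i))). rewrite tech5.
    replace (acoef k (S k)) with 0 by (unfold acoef; rewrite gbinom_nat_high; ring).
    rewrite (sum_eq (fun i => acoef k i * (F (s + INR i + 1) - F (s + INR i)))
                    (fun i => acoef k i * F (s + INR i + 1) - acoef k i * F (s + INR i))).
    2: { intros; ring. }
    rewrite minus_sum. simpl INR. rewrite Rplus_0_r. ring.
Qed.

Lemma sum_trunc (f : nat -> R) i m : (i <= m)%nat -> (forall k, (i < k <= m)%nat -> f k = 0) ->
  sum_f_R0 f m = sum_f_R0 f i.
Proof.
  induction 1 as [|m Hm IH]; intros H; auto.
  rewrite tech5, H by lia. rewrite IH. ring. intros; apply H; lia.
Qed.

Lemma c_conv m b (F : R -> R) :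
  sum_f_R0 (fun i => c_coef m b i * F (INR i)) m = sum_f_R0 (fun k => b k * dif k F 0) m.
Proof.
  induction m as [|m IH].
  - simpl. unfold c_coef. simpl. rewrite gbinom0. ring.
  - rewrite !tech5.
    rewrite (sum_eq (fun i => c_coef (S m) b i * F (INR i))
               (fun i => c_coef m b i * F (INR i) + b (S m) * (acoef (S m) i * F (0 + INR i)))).
    2: { intros i Hi. unfold c_coef. replace (S m - i)%nat with (S (m - i)) by lia.
         rewrite tech5. replace (i + S (m - i))%nat with (S m) by lia.
         unfold acoef. replace (S m - i)%nat with (S (m - i)) by lia. rewrite Rplus_0_l. ring. }
    rewrite plus_sum, IH. rewrite (dif_formula (S m)). rewrite tech5.
    rewrite (sum_eq (fun i => b (S m) * (acoef (S m) i * F (0 + INR i))) (fun i => (acoef (S m) i * F (0 + INR i)) * b (S m))) by (intros; ring).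
    rewrite <- scal_sum.
    unfold c_coef. rewrite Nat.sub_diag. cbn [sum_f_R0]. rewrite !Nat.add_0_r.
    unfold acoef. rewrite Nat.sub_diag. rewrite Rplus_0_l. cbn [pow]. ring.
Qed.

Lemma ex_derive_Rplus (f g : R -> R) x : ex_derive f x -> ex_derive g x -> ex_derive (fun t => f t + g t) x.
Proof. intros; apply (ex_derive_plus f g x); auto. Qed.

Definition Lam (alpha : R) (m : nat) (b : nat -> R) (G : R -> R) : R :=
  G (1 - alpha) - G (- alpha) - Derive G 0
  + sum_f_R0 (fun i => c_coef m b i * (Derive G (INR i + 1) - Derive G (INR i))) m.

Lemma Lam_basis alpha m b : b_system alpha m b -> forall j, (j <= m + 2)%nat ->
  Lam alpha m b (fun s => gbinom s j) = 0.
Proof.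
  intros Hsys j Hj. unfold Lam.
  destruct j as [|J].
  - assert (HD0 : forall t, Derive (fun s => gbinom s 0) t = 0).
    { intros t. rewrite (Derive_ext _ (fun _ => 1)) by (intros; apply gbinom0). apply Derive_const. }
    rewrite !HD0, !gbinom0. rewrite (sum_eq _ (fun _ => 0)). rewrite sum_cte. ring.
    intros i Hi. rewrite !HD0. ring.
  - assert (HD : forall t, Derive (fun s => gbinom s (S J)) t = Hf J t).
    { intros t. apply is_derive_unique, gbinom_derive. }
    rewrite !HD.
    rewrite (sum_eq _ (fun i => c_coef m b i * (Hf J (INR i + 1) - Hf J (INR i)))) by (intros; rewrite !HD; auto).
    replace (1 - alpha) with (- alpha + 1) by ring. rewrite gbinom_pascal.
    destruct J as [|i].
    + rewrite gbinom0, Hf0. rewrite (sum_eq _ (fun _ => 0)). rewrite sum_cte. ring.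
      intros; rewrite !Hf0; ring.
    + rewrite (sum_eq _ (fun l => c_coef m b l * Hf i (INR l))).
      2: { intros l _. rewrite Hf_diff. auto. }
      rewrite c_conv.
      rewrite (sum_trunc _ i m) by (try lia; intros k Hk; rewrite dif_Hf_high by lia; ring).
      rewrite (sum_eq _ (fun k => (-1) ^ (i - k) / INR (i - k + 1) * b k)).
      2: { intros k Hk. rewrite dif_Hf by lia. rewrite Hf_at0. ring. }
      rewrite (Hsys i) by lia. rewrite Hf_at0.
      replace (S i + 1)%nat with (i + 2)%nat by lia.
      replace (i + 1)%nat with (S i) by lia. ring.
Qed.

Lemma core2 alpha m b : b_system alpha m b -> forall G, Poly (m + 2) G ->
  G (1 - alpha) - G (- alpha) = Derive G 0 -
  sum_f_R0 (fun i => c_coef m b i * (Derive G (INR i + 1) - Derive G (INR i))) m.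
Proof.
  intros Hsys G HG.
  cut ((forall s, ex_derive G s) /\ Lam alpha m b G = 0).
  { intros [_ H]. unfold Lam in H. lra. }
  revert G HG. apply span.
  - intros F1 F2 [D1 L1] [D2 L2]. split.
    + intros; apply ex_derive_Rplus; auto.
    + unfold Lam in *. rewrite !Derive_plus by auto.
      rewrite (sum_eq (fun i => c_coef m b i * (Derive (fun s => F1 s + F2 s) (INR i + 1) - Derive (fun s => F1 s + F2 s) (INR i)))
                (fun i => c_coef m b i * (Derive F1 (INR i + 1) - Derive F1 (INR i)) +
                                  c_coef m b i * (Derive F2 (INR i + 1) - Derive F2 (INR i)))).
      rewrite plus_sum. lra. intros; rewrite !Derive_plus by auto; ring.
  - intros c F [D1 L1]. split.
    + intros; apply ex_derive_scal; auto.
    + unfold Lam in *. rewrite !Derive_scal.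
      rewrite (sum_eq (fun i => c_coef m b i * (Derive (fun s => c * F s) (INR i + 1) - Derive (fun s => c * F s) (INR i))) (fun i => (c_coef m b i * (Derive F (INR i + 1) - Derive F (INR i))) * c)).
      rewrite <- scal_sum.
      replace (c * F (1 - alpha) - c * F (- alpha) - c * Derive F 0 +
        c * sum_f_R0 (fun i : nat => c_coef m b i * (Derive F (INR i + 1) - Derive F (INR i))) m)
        with (c * (F (1 - alpha) - F (- alpha) - Derive F 0 +
        sum_f_R0 (fun i : nat => c_coef m b i * (Derive F (INR i + 1) - Derive F (INR i))) m)) by ring.
      rewrite L1; ring. intros; rewrite !Derive_scal; ring.
  - intros F1 F2 He [D1 L1]. split.
    + intros; apply ex_derive_ext with F1; auto.
    + unfold Lam in *. rewrite <- !He.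
      assert (HE : forall t, Derive F2 t = Derive F1 t) by (intros; apply Derive_ext; intros; symmetry; auto).
      rewrite HE. rewrite (sum_eq _ (fun i => c_coef m b i * (Derive F1 (INR i + 1) - Derive F1 (INR i)))).
      auto. intros; rewrite !HE; auto.
  - intros j Hj. split.
    + apply Poly_derive with j. apply Poly_gbinom.
    + apply Lam_basis; auto.
Qed.

Lemma Derive_affine (G : R -> R) A u v s : (forall t, ex_derive G t) ->
  Derive (fun t => A * G (u * t + v)) s = A * u * Derive G (u * s + v).
Proof.
  intros HG. apply is_derive_unique.
  assert (H1 : is_derive (fun t => u * t + v) s u) by (auto_derive; auto; ring).
  generalize (is_derive_comp G (fun t => u * t + v) s _ u (Derive_correct G _ (HG (u * s + v))) H1).
  intros H2. eapply is_derive_eq. apply (is_derive_scal (fun t => G (u * t + v))). exact H2.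
  unfold scal; simpl; unfold mult; simpl. ring.
Qed.

Lemma Derive_shift (G : R -> R) s : (forall t, ex_derive G t) ->
  Derive (fun t => G (t + 1)) s = Derive G (s + 1).
Proof.
  intros HG. rewrite (Derive_ext _ (fun t => 1 * G (1 * t + 1))).
  2: { intros t. replace (1 * t + 1) with (t + 1) by ring. ring. }
  rewrite Derive_affine by auto. replace (1 * s + 1) with (s + 1) by ring. ring.
Qed.

Lemma Derive_refl (G : R -> R) c s : (forall t, ex_derive G t) ->
  Derive (fun t => - G (c - t)) s = Derive G (c - s).
Proof.
  intros HG. rewrite (Derive_ext _ (fun t => (-1) * G ((-1) * t + c))).
  rewrite Derive_affine by auto. replace (-1 * s + c) with (c - s) by ring. ring.
  intros t. replace (-1 * t + c) with (c - t) by ring. ring.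
Qed.

Lemma Poly_refl d (G : R -> R) c : Poly d G -> Poly d (fun t => - G (c - t)).
Proof.
  intros H. eapply Poly_ext. 2: apply (Poly_affine d (-1) (-1) c G H).
  intros t; simpl. replace (-1 * t + c) with (c - t) by ring. ring.
Qed.

Lemma Poly_shift d (G : R -> R) c : Poly d G -> Poly d (fun t => G (t + c)).
Proof.
  intros H. eapply Poly_ext. 2: apply (Poly_affine d 1 1 c G H).
  intros t; simpl. replace (1 * t + c) with (t + c) by ring. ring.
Qed.

Lemma sum_comb (c X Y Z : nat -> R) m : (forall i, X i = Y i - Z i) ->
  sum_f_R0 (fun i => c i * X i) m = sum_f_R0 (fun i => c i * Y i) m - sum_f_R0 (fun i => c i * Z i) m.
Proof. intros H. rewrite <- minus_sum. apply sum_eq. intros; rewrite H; ring. Qed.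

Lemma antidiff d : forall G, Poly d G -> exists K, Poly (S d) K /\ forall s, G s = K (s + 1) - K s.
Proof.
  apply span.
  - intros F1 F2 [K1 [P1 H1]] [K2 [P2 H2]]. exists (fun s => K1 s + K2 s). split.
    apply Poly_plus; auto. intros; rewrite H1, H2; ring.
  - intros c F [K1 [P1 H1]]. exists (fun s => c * K1 s). split.
    apply Poly_scal; auto. intros; rewrite H1; ring.
  - intros F1 F2 He [K1 [P1 H1]]. exists K1. split; auto. intros; rewrite <- He; auto.
  - intros j Hj. exists (fun s => gbinom s (S j)). split.
    apply Poly_le with (S j). lia. apply Poly_gbinom.
    intros s. rewrite gbinom_pascal. auto.
Qed.

Definition Vf (alpha : R) (m : nat) (b : nat -> R) (G : R -> R) : R :=
  G (alpha - 1) - G (- alpha) -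
  sum_f_R0 (fun i => c_coef m b i * (Derive G (INR i) + Derive G (-1 - INR i))) m.

Lemma Vf_diff alpha m b : b_system alpha m b -> forall K, Poly (m + 2) K ->
  Vf alpha m b (fun s => K (s + 1) - K s) = 0.
Proof.
  intros Hsys K HK.
  assert (DK : forall t, ex_derive K t) by (apply Poly_derive with (m+2)%nat; auto).
  assert (E1 := core2 alpha m b Hsys K HK).
  assert (E2 := core2 alpha m b Hsys _ (Poly_refl _ K 0 HK)).
  rewrite !Derive_refl in E2 by auto.
  rewrite (sum_eq _ (fun i => c_coef m b i * (Derive K (0 - (INR i + 1)) - Derive K (0 - INR i)))) in E2
    by (intros; rewrite !Derive_refl by auto; auto).
  unfold Vf.
  assert (HD : forall t, Derive (fun s => K (s + 1) - K s) t = Derive K (t + 1) - Derive K t).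
  { intros t. rewrite Derive_minus. rewrite Derive_shift by auto. auto.
    apply Poly_derive with (m+2)%nat. apply Poly_shift; auto. auto. }
  rewrite (sum_comb _ _ (fun i => Derive K (INR i + 1) - Derive K (INR i))
                        (fun i => Derive K (0 - (INR i + 1)) - Derive K (0 - INR i))).
  2: { intros i. rewrite !HD. replace (-1 - INR i + 1) with (0 - INR i) by ring.
       replace (-1 - INR i) with (0 - (INR i + 1)) by ring. ring. }
  replace (0 - (1 - alpha)) with (alpha - 1) in E2 by ring.
  replace (0 - - alpha) with alpha in E2 by ring.
  replace (0 - 0) with 0 in E2 by ring.
  replace (alpha - 1 + 1) with alpha by ring.
  replace (- alpha + 1) with (1 - alpha) by ring.
  lra.
Qed.

Lemma pow_neg_even x k : (- x) ^ (2 * k) = x ^ (2 * k).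
Proof. replace (- x) with ((-1) * x) by ring. rewrite Rpow_mult_distr, pow_1_even. ring. Qed.

Lemma pow_neg_odd x k : (- x) ^ (S (2 * k)) = - x ^ (S (2 * k)).
Proof. replace (- x) with ((-1) * x) by ring. rewrite Rpow_mult_distr, pow_1_odd. ring. Qed.

Lemma Derive_pw N t : Derive (fun t => (t + /2) ^ (S N)) t = INR (S N) * (t + /2) ^ N.
Proof. apply is_derive_unique. auto_derive; auto. rewrite S_INR. destruct N; simpl; ring. Qed.

Lemma Vf_pw alpha m b : Nat.Even m -> Vf alpha m b (fun t => (t + /2) ^ (m + 2)) = 0.
Proof.
  intros [k ->]. unfold Vf.
  replace (2 * k + 2)%nat with (S (S (2 * k))) by lia.
  rewrite (sum_eq _ (fun _ => 0)). rewrite sum_cte.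
  replace (- alpha + /2) with (- (alpha - 1 + /2)) by field.
  replace (S (S (2 * k))) with (2 * (k + 1))%nat by lia.
  rewrite pow_neg_even. ring.
  intros i _. rewrite !Derive_pw. replace (-1 - INR i + /2) with (- (INR i + /2)) by field.
  rewrite pow_neg_odd. ring.
Qed.

Lemma sum_scal_l (X : nat -> R) l m : sum_f_R0 (fun i => l * X i) m = l * sum_f_R0 X m.
Proof. rewrite scal_sum. apply sum_eq. intros; ring. Qed.

Lemma V0 alpha m b : Nat.Even m -> b_system alpha m b -> forall G, Poly (m + 2) G -> Vf alpha m b G = 0.
Proof.
  intros Hev Hsys G HG.
  assert (HG' := Poly_affine (m+2) 1 1 (- / 2) G HG).
  replace (m + 2)%nat with (S (m + 1)) in HG' by lia.
  destruct (Poly_top _ _ HG') as [l [r [Pr Hr]]].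
  assert (HGe : forall t, G t = l * (t + /2) ^ (m + 2) + r (t + /2)).
  { intros t. replace (m + 2)%nat with (S (m + 1)) by lia. rewrite <- Hr.
    replace (1 * (t + /2) + - /2) with t by field. ring. }
  assert (Pr' : Poly (m + 1) (fun t => r (t + /2))) by (apply Poly_shift; auto).
  destruct (antidiff _ _ Pr') as [K [PK HK]].
  replace (S (m + 1)) with (m + 2)%nat in PK by lia.
  assert (Epw : forall t, ex_derive (fun t => (t + /2) ^ (m + 2)) t) by (intros; auto_derive; auto).
  assert (Er : forall t, ex_derive (fun t => r (t + /2)) t).
  { apply Poly_derive with (m+1)%nat; auto. }
  assert (HD : forall t, Derive G t = l * Derive (fun t => (t + /2) ^ (m + 2)) t + Derive (fun t => K (t + 1) - K t) t).
  { intros t. rewrite (Derive_ext G (fun t => l * (t + /2) ^ (m + 2) + r (t + /2))) by auto.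
    rewrite Derive_plus. rewrite Derive_scal. f_equal. apply Derive_ext. auto.
    apply ex_derive_scal; auto. auto. }
  assert (V1 := Vf_pw alpha m b Hev). assert (V2 := Vf_diff alpha m b Hsys K PK).
  unfold Vf in *.
  rewrite (sum_eq _ (fun i => l * (c_coef m b i * (Derive (fun t => (t + /2) ^ (m + 2)) (INR i) + Derive (fun t => (t + /2) ^ (m + 2)) (-1 - INR i))) +
      c_coef m b i * (Derive (fun s => K (s + 1) - K s) (INR i) + Derive (fun s => K (s + 1) - K s) (-1 - INR i)))).
  2: { intros; rewrite !HD; ring. }
  rewrite plus_sum. rewrite sum_scal_l.
  assert (E1 : sum_f_R0 (fun i => c_coef m b i * (Derive (fun t => (t + /2) ^ (m + 2)) (INR i) + Derive (fun t => (t + /2) ^ (m + 2)) (-1 - INR i))) m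
     = (alpha - 1 + / 2) ^ (m + 2) - (- alpha + / 2) ^ (m + 2)) by lra.
  assert (E2 : sum_f_R0 (fun i => c_coef m b i * (Derive (fun s => K (s + 1) - K s) (INR i) + Derive (fun s => K (s + 1) - K s) (-1 - INR i))) m
     = K (alpha - 1 + 1) - K (alpha - 1) - (K (- alpha + 1) - K (- alpha))) by lra.
  rewrite E1, E2, !HGe. rewrite !HK. 
  replace (alpha - 1 + / 2 + 1) with (alpha - 1 + 1 + /2) by ring.
  replace (- alpha + / 2 + 1) with (- alpha + 1 + /2) by ring.
  rewrite <- !HK. ring.
Qed.

Lemma main_h1 alpha m b : Nat.Even m -> b_system alpha m b -> forall G, Poly (m + 2) G ->
  forall n, G (INR n + alpha) - G (- alpha) =
    sum_f_R0 (fun i => Derive G (INR i)) n +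
    sum_f_R0 (fun i => c_coef m b i * (Derive G (INR i) + Derive G (INR n - INR i))) m.
Proof.
  intros Hev Hsys G HG.
  assert (DG : forall t, ex_derive G t) by (apply Poly_derive with (m+2)%nat; auto).
  induction n as [|n IH].
  - assert (E2 := core2 alpha m b Hsys _ (Poly_refl _ G 0 HG)).
    rewrite !Derive_refl in E2 by auto.
    rewrite (sum_eq _ (fun i => c_coef m b i * (Derive G (0 - (INR i + 1)) - Derive G (0 - INR i)))) in E2
      by (intros; rewrite !Derive_refl by auto; auto).
    assert (E3 := V0 alpha m b Hev Hsys G HG). unfold Vf in E3.
    rewrite (sum_comb _ _ (fun i => Derive G (INR i) + Derive G (-1 - INR i))
                          (fun i => Derive G (0 - (INR i + 1)) - Derive G (0 - INR i))).
    2: { intros i. replace (0 - INR i) with (INR 0 - INR i) by (simpl; ring).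
         replace (-1 - INR i) with (0 - (INR i + 1)) by ring. ring. }
    replace (0 - (1 - alpha)) with (alpha - 1) in E2 by ring.
    replace (0 - - alpha) with (INR 0 + alpha) in E2 by (simpl; ring).
    replace (0 - 0) with 0 in E2 by ring.
    simpl sum_f_R0. lra.
  - assert (E2 := core2 alpha m b Hsys _ (Poly_refl _ G (INR n + 1) HG)).
    rewrite !Derive_refl in E2 by auto.
    rewrite (sum_eq _ (fun i => c_coef m b i * (Derive G (INR n + 1 - (INR i + 1)) - Derive G (INR n + 1 - INR i)))) in E2
      by (intros; rewrite !Derive_refl by auto; auto).
    rewrite tech5.
    rewrite (sum_comb _ _ (fun i => Derive G (INR i) + Derive G (INR n - INR i))
                          (fun i => Derive G (INR n + 1 - (INR i + 1)) - Derive G (INR n + 1 - INR i))).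
    2: { intros i. rewrite S_INR. replace (INR n + 1 - (INR i + 1)) with (INR n - INR i) by ring. ring. }
    rewrite S_INR.
    replace (INR n + 1 - (1 - alpha)) with (INR n + alpha) in E2 by ring.
    replace (INR n + 1 - - alpha) with (INR n + 1 + alpha) in E2 by ring.
    replace (INR n + 1 - 0) with (INR n + 1) in E2 by ring.
    lra.
Qed.

Definition antic (a : nat -> R) (j : nat) : R :=
  match j with O => 0 | S j' => a j' / INR (S j') end.

Lemma antic_derive a d t : is_derive (polyR (antic a) (S d)) t (polyR a d t).
Proof.
  revert t; induction d as [|d IH]; intros t.
  - unfold polyR. cbn [sum_f_R0 antic]. auto_derive; auto. simpl. field.
  - apply is_derive_ext with (fun t => polyR (antic a) (S d) t + a (S d) / INR (S (S d)) * t ^ (S (S d))).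
    { intros; unfold polyR; cbn [sum_f_R0]. reflexivity. }
    assert (Hc : INR (S (S d)) <> 0) by (apply not_0_INR; discriminate).
    set (c := INR (S (S d))) in *.
    assert (Hp : is_derive (fun t => a (S d) / c * t ^ (S (S d))) t (a (S d) * t ^ (S d))).
    { assert (Hq : is_derive (fun t => t ^ (S (S d))) t (c * 1 * t ^ (S d))).
      { apply (is_derive_pow (fun t => t) (S (S d)) t 1). apply (is_derive_id (K := R_AbsRing)). }
      eapply is_derive_eq. apply (is_derive_scal (fun t => t ^ (S (S d)))). apply Hq. match goal with |- ?x = ?y => change (@eq R x y) end. field. auto. }
    eapply is_derive_eq. apply is_derive_Rplus. apply IH. apply Hp.
    unfold polyR; cbn [sum_f_R0]. reflexivity.
Qed.

Theorem mainTheorem2 (alpha : R) (m : nat) (b : nat -> R) :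
  Nat.Even m ->
  b_system alpha m b ->
  forall (n : nat) (h : R) (a : nat -> R),
    0 < h ->
    RInt (polyR a (m + 1)) (- alpha * h) ((INR n + alpha) * h)
    = h * sum_f_R0 (fun i => polyR a (m + 1) (INR i * h)) n
      + h * sum_f_R0 (fun i => c_coef m b i *
              (polyR a (m + 1) (INR i * h) + polyR a (m + 1) ((INR n - INR i) * h))) m.
Proof.
  intros Hev Hsys n h a Hh.
  set (f := polyR a (m + 1)).
  set (F := polyR (antic a) (S (m + 1))).
  assert (HF : forall t, is_derive F t (f t)) by (intros; apply antic_derive).
  assert (Hc : forall t, continuous f t).
  { intros t. apply (ex_derive_continuous (K := R_AbsRing) (V := R_NormedModule) f t). apply Poly_derive with (m+1)%nat. apply Poly_polyR. }
  rewrite (is_RInt_unique _ _ _ _ (is_RInt_derive F f _ _ (fun x _ => HF x) (fun x _ => Hc x))).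
  set (G := fun s => / h * F (h * s + 0)).
  assert (PG : Poly (m + 2) G).
  { unfold G. apply Poly_affine. replace (m + 2)%nat with (S (m + 1)) by lia. apply Poly_polyR. }
  assert (DF : forall t, ex_derive F t) by (intros t; exists (f t); auto).
  assert (DG : forall s, Derive G s = f (s * h)).
  { intros s. unfold G. rewrite Derive_affine by auto. rewrite (is_derive_unique _ _ _ (HF _)).
    replace (h * s + 0) with (s * h) by ring. field. lra. }
  assert (M := main_h1 alpha m b Hev Hsys G PG n).
  rewrite (sum_eq (fun i => Derive G (INR i)) (fun i => f (INR i * h))) in M by (intros; apply DG).
  rewrite (sum_eq (fun i => c_coef m b i * (Derive G (INR i) + Derive G (INR n - INR i))) (fun i => c_coef m b i * (f (INR i * h) + f ((INR n - INR i) * h)))) in M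
    by (intros; rewrite !DG; auto).
  unfold G in M.
  replace (F ((INR n + alpha) * h)) with (h * (/ h * F (h * (INR n + alpha) + 0))).
  replace (F (- alpha * h)) with (h * (/ h * F (h * - alpha + 0))).
  unfold minus, plus, opp; simpl.
  transitivity (h * (/ h * F (h * (INR n + alpha) + 0) - / h * F (h * - alpha + 0))). ring.
  rewrite M. ring.
  replace (h * - alpha + 0) with (- alpha * h) by ring. field. lra.
  replace (h * (INR n + alpha) + 0) with ((INR n + alpha) * h) by ring. field. lra.
Qed.
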